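(* For every positive integer $n$, the number $J_n$ of vectors $(\delta_0,\ldots,\delta_n)\in\{-1,1\}^{n+1}$ with $\sum_{i=0}^n\delta_i\binom{n}{i}=0$ equals the number $x_n$ of arrays $(a_0,\ldots,a_n)\in\{0,1\}^{n+1}$ whose $n$-th difference is zero, i.e. with $\sum_{t=0}^n\binom{n}{t}(-1)^t a_{n-t}=0$.
   Context: For a list $L=[a_0,\ldots,a_n]$ the first difference is $\Delta(L)=[a_1-a_0,\ldots,a_n-a_{n-1}]$ and $\Delta^k=\Delta(\Delta^{k-1})$; the $n$-th difference of a list of $n+1$ elements is the single number $\sum_{t=0}^n\binom{n}{t}(-1)^ta_{n-t}$. *)

(* Defs.v *)
From mathcomp Require Import all_boot all_order all_algebra.
Set Implicit Arguments. Unset Strict Implicit. Unset Printing Implicit Defensive.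
Import Order.TTheory GRing.Theory Num.Theory.
Local Open Scope ring_scope.

Definition diff_list (L : seq int) : seq int :=
  [seq (nth 0 L i.+1 - nth 0 L i) | i <- iota 0 (size L).-1].

Definition diffk (k : nat) (L : seq int) : seq int := iter k diff_list L.

Definition nth_diff (n : nat) (L : seq int) : int := nth 0 (diffk n L) 0.

Definition sgn (b : bool) : int := if b then 1 else -1.

Definition J (n : nat) : nat :=
  #|[set d : {ffun 'I_n.+1 -> bool} |
     \sum_(i < n.+1) sgn (d i) * ('C(n, i))%:Z == 0]|.

Definition x (n : nat) : nat :=
  #|[set a : {ffun 'I_n.+1 -> bool} |
     nth_diff n [seq ((a i : nat))%:Z | i <- enum 'I_n.+1] == 0]|.

(* Main.v *)
Require Import Defs.
From mathcomp Require Import all_boot all_order all_algebra.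
From mathcomp Require Import zify.
Set Implicit Arguments. Unset Strict Implicit. Unset Printing Implicit Defensive.
Import Order.TTheory GRing.Theory Num.Theory.
Local Open Scope ring_scope.

Lemma pascal_sum (k : nat) (F : nat -> int) :
  \sum_(i < k.+1) (-1)^+(k+i) * ('C(k,i))%:Z * (F i.+1 - F i) =
  \sum_(i < k.+2) (-1)^+(k.+1+i) * ('C(k.+1,i))%:Z * F i.
Proof.
have bz : forall i, bump 0 i = i.+1 by [].
rewrite [in RHS]big_ord_recl.
under [in RHS]eq_bigr => i _ do rewrite /= bz binS PoszD addSn addnS !exprS !mulN1r opprK mulrDr mulrDl.
rewrite big_split /=.
under eq_bigr => i _ do rewrite mulrBr.
rewrite sumrB [RHS]addrA [LHS]addrC; congr (_ + _).
rewrite [in RHS]big_ord_recr /=.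
have -> : ('C(k, k.+1))%:Z = 0 :> int by rewrite bin_small.
rewrite mulr0 mul0r addr0.
rewrite [in LHS]big_ord_recl /=.
rewrite opprD -sumrN; congr (_ + _); first by rewrite !addn0 !bin0 exprS mulN1r !mulr1 mulNr.
by apply: eq_bigr => i _; rewrite bz addnS exprS !mulN1r !mulNr opprK.
Qed.

Lemma size_diff L : size (diff_list L) = (size L).-1.
Proof. by rewrite size_map size_iota. Qed.

Lemma nth_diff_list L j : (j.+1 < size L)%N -> nth 0 (diff_list L) j = L`_j.+1 - L`_j.
Proof.
move=> h; rewrite (nth_map 0%N) ?size_iota ?nth_iota //; by case: (size L) h.
Qed.

Lemma size_diffk k L : size (diffk k L) = (size L - k)%N.
Proof.
elim: k L => [|k IH] L; first by rewrite subn0.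
by rewrite /diffk iterSr -/(diffk k _) IH size_diff; case: (size L) => //= m; rewrite subSS.
Qed.

Lemma diffk_formula k : forall L j, (j + k < size L)%N ->
  nth 0 (diffk k L) j = \sum_(i < k.+1) (-1)^+(k+i) * ('C(k,i))%:Z * L`_(j+i).
Proof.
elim: k => [|k IH] L j h.
  by rewrite big_ord1 /= !addn0 bin0 expr0 !mul1r.
have -> : diffk k.+1 L = diffk k (diff_list L) by exact: iterSr.
rewrite IH; last first.
  rewrite size_diff; move: h; case: (size L) => //= m; lia.
rewrite -(pascal_sum k (fun i => L`_(j+i))).
apply: eq_bigr => i _; rewrite nth_diff_list ?addnS //.
have := ltn_ord i; lia.
Qed.

Lemma nthdiff_a n (a : {ffun 'I_n.+1 -> bool}) :
  nth_diff n [seq ((a i : nat))%:Z | i <- enum 'I_n.+1] =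
  \sum_(i < n.+1) (-1)^+(n+i) * ('C(n,i))%:Z * ((a i : nat))%:Z.
Proof.
rewrite /nth_diff diffk_formula; last by rewrite size_map size_enum_ord.
apply: eq_bigr => i _; rewrite add0n (nth_map ord0) ?size_enum_ord //.
by rewrite nth_ord_enum.
Qed.

Lemma alt_sum n : (0 < n)%N -> \sum_(i < n.+1) (-1)^+(n+i) * ('C(n,i))%:Z = 0 :> int.
Proof.
move=> n0.
have := exprDn (1 : int) (-1) n.
rewrite subrr expr0n eqn0Ngt n0 /= => /esym h.
under eq_bigr => i _ do rewrite exprD -mulrA.
rewrite -mulr_sumr; set S := (X in _ * X).
suff -> : S = 0 by rewrite mulr0.
apply: etrans h; apply: eq_bigr => i _; by rewrite expr1n mul1r -mulr_natr natz.
Qed.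

Lemma sgn_id (b : bool) (m : nat) (c : int) :
  sgn (b (+) odd m) * c = 2 * ((-1)^+m * c * (b : nat)%:Z) - (-1)^+m * c.
Proof.
rewrite -signr_odd; case: (odd m); case: b; rewrite /sgn /=; lia.
Qed.

Theorem mainTheorem4 (n : nat) : (0 < n)%N -> J n = x n.
Proof.
move=> n0.
pose phi (a : {ffun 'I_n.+1 -> bool}) : {ffun 'I_n.+1 -> bool} :=
  [ffun i => a i (+) odd (n + i)].
have phiK : forall a, phi (phi a) = a.
  by move=> a; apply/ffunP => i; rewrite !ffunE addbK.
have phi_inj : injective phi by apply: (can_inj phiK).
rewrite /J /x -(card_imset _ phi_inj); apply: eq_card => d.
rewrite -{1}[d]phiK mem_imset // !inE nthdiff_a.
have -> : \sum_(i < n.+1) sgn (phi d i) * ('C(n, i))%:Z =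
   2 * (\sum_(i < n.+1) (-1)^+(n+i) * ('C(n,i))%:Z * ((d i : nat))%:Z).
  transitivity (\sum_(i < n.+1) (2 * ((-1)^+(n+i) * ('C(n,i))%:Z * ((d i : nat))%:Z)
                  - (-1)^+(n+i) * ('C(n,i))%:Z)).
    by apply: eq_bigr => i _; rewrite -sgn_id ffunE.
  by rewrite sumrB alt_sum // subr0 mulr_sumr.
by rewrite mulf_eq0.
Qed.
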